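(* Fix $\tau\in\mathbb N$, $d\in(1,2]$, $m\in[1,\infty)$. Let $S=\{x_0,x_1,\dots,x_\tau\}$ (distinct points) with the metric $\rho(x,y)=1$ if $x\ne y$ and $x_0\in\{x,y\}$, $\rho(x,y)=d$ for distinct $x,y\in\{x_1,\dots,x_\tau\}$, and the measure $\mu(\{x_0\})=1$, $\mu(\{x_i\})=m$ for $i\in\{1,\dots,\tau\}$; let $\mathfrak S=(S,\rho,\mu)$. Then, with implicit constants independent of $\tau,d,m,\kappa$ (depending at most on $p$), $$\mathfrak c_{\mathfrak S}(\kappa,p)\simeq\mathfrak c^{\rm c}_{\mathfrak S}(\kappa,p)\simeq\begin{cases}\max\{1,\tau^{1/p}m^{1/p-1}\}& \kappa\in[1,d),\ p\in[1,\infty),\\ 1&\kappa\in[d,\infty)\text{ or }p=\infty.\end{cases}$$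
   Context: For $\kappa\ge1$: $\mathcal M^{\rm c}_{\kappa}f(x)=\sup_{s>0}\mu(B(x,\kappa s))^{-1}\int_{B(x,s)}|f|d\mu$ and $\mathcal M_\kappa f(x)=\sup\{\mu(B(y,\kappa s))^{-1}\int_{B(y,s)}|f|d\mu: y\in X, s>0, x\in B(y,s)\}$, where $B(y,s)$ are open balls. $\mathfrak c^{\rm c}_{\mathfrak X}(\kappa,p)$ (respectively $\mathfrak c_{\mathfrak X}(\kappa,p)$) is the best constant $C$ in $\sup_{\lambda>0}\lambda\mu(\{|Tf|>\lambda\})^{1/p}\le C\|f\|_p$ for $T=\mathcal M^{\rm c}_\kappa$ (respectively $T=\mathcal M_\kappa$), $p<\infty$, and the $L^\infty$ operator norm for $p=\infty$. *)

(* Defs.v *)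
From HB Require Import structures.
From mathcomp Require Import all_boot all_order all_algebra.
From mathcomp Require Import boolp classical_sets reals ereal exp.
Set Implicit Arguments. Unset Strict Implicit. Unset Printing Implicit Defensive.
Import Order.TTheory GRing.Theory Num.Theory.
Local Open Scope classical_set_scope.
Local Open Scope ring_scope.

(* The space S = {x_0, ..., x_tau} is 'I_tau.+1, with x_0 = ord0. *)

Definition rhoS (R : realType) (tau : nat) (d : R) (x y : 'I_tau.+1) : R :=
  if x == y then 0 else if (x == ord0) || (y == ord0) then 1 else d.

Definition wtS (R : realType) (tau : nat) (m : R) (x : 'I_tau.+1) : R :=
  if x == ord0 then 1 else m.

Definition muS (R : realType) (tau : nat) (m : R) (A : pred 'I_tau.+1) : R :=
  \sum_(x : 'I_tau.+1 | A x) wtS m x.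

Definition ballS (R : realType) (tau : nat) (d : R) (y : 'I_tau.+1) (s : R)
  : pred 'I_tau.+1 := [pred x | rhoS d y x < s].

Definition intBallS (R : realType) (tau : nat) (d m : R)
  (f : 'I_tau.+1 -> R) (y : 'I_tau.+1) (s : R) : R :=
  \sum_(x : 'I_tau.+1 | rhoS d y x < s) `|f x| * wtS m x.

Definition McS (R : realType) (tau : nat) (d m kappa : R)
  (f : 'I_tau.+1 -> R) (x : 'I_tau.+1) : R :=
  sup ((fun s => (muS m (ballS d x (kappa * s)))^-1 * intBallS d m f x s)
         @` [set s : R | 0 < s]).

Definition MuS (R : realType) (tau : nat) (d m kappa : R)
  (f : 'I_tau.+1 -> R) (x : 'I_tau.+1) : R :=
  sup ((fun ys : 'I_tau.+1 * R =>
          (muS m (ballS d ys.1 (kappa * ys.2)))^-1 * intBallS d m f ys.1 ys.2)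
         @` [set ys : 'I_tau.+1 * R | 0 < ys.2 /\ rhoS d ys.1 x < ys.2]).

Definition LpnormS (R : realType) (tau : nat) (m q : R) (f : 'I_tau.+1 -> R) : R :=
  (\sum_(x : 'I_tau.+1) (`|f x| `^ q) * wtS m x) `^ (q^-1).

(* L^oo norm (every point has positive mass) *)
Definition LinfS (R : realType) (tau : nat) (f : 'I_tau.+1 -> R) : R :=
  \big[Num.max/0]_(x : 'I_tau.+1) `|f x|.

Definition admissibleS (R : realType) (tau : nat) (m : R)
  (T : ('I_tau.+1 -> R) -> ('I_tau.+1 -> R)) (p : \bar R) (C : R) : Prop :=
  match p with
  | EFin q => forall (f : 'I_tau.+1 -> R) (lam : R), 0 < lam ->
      lam * (muS m [pred x | lam < `|T f x|]) `^ (q^-1) <= C * LpnormS m q f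
  | _ => forall f : 'I_tau.+1 -> R, LinfS (T f) <= C * LinfS f
  end.

Definition best_constS (R : realType) (tau : nat) (m : R)
  (T : ('I_tau.+1 -> R) -> ('I_tau.+1 -> R)) (p : \bar R) : R :=
  inf [set C : R | 0 <= C /\ admissibleS m T p C].

Definition cc_S (R : realType) (tau : nat) (d m kappa : R) (p : \bar R) : R :=
  best_constS (tau:=tau) m (McS d m kappa) p.
Definition c_S (R : realType) (tau : nat) (d m kappa : R) (p : \bar R) : R :=
  best_constS (tau:=tau) m (MuS d m kappa) p.

Definition targetS (R : realType) (tau : nat) (d m kappa : R) (p : \bar R) : R :=
  match p with
  | EFin q => if kappa < d then Num.max 1 ((tau%:R) `^ (q^-1) * m `^ (q^-1 - 1))
              else 1
  | _ => 1
  end.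

(* Main.v *)
Require Import Defs.
From HB Require Import structures.
From mathcomp Require Import all_boot all_order all_algebra.
From mathcomp Require Import boolp classical_sets reals ereal exp.
From mathcomp Require Import ring lra.
Import Order.TTheory GRing.Theory Num.Theory.
Set Implicit Arguments. Unset Strict Implicit. Unset Printing Implicit Defensive.
Local Open Scope classical_set_scope.
Local Open Scope ring_scope.

Lemma wt_ge1 (R : realType) (tau : nat) (m : R) (x : 'I_tau.+1) :
  1 <= m -> 1 <= wtS m x.
Proof. by rewrite /wtS; case: ifP. Qed.

Lemma wt_gt0 (R : realType) (tau : nat) (m : R) (x : 'I_tau.+1) :
  1 <= m -> 0 < wtS m x.
Proof. by move=> /(wt_ge1 x) h; apply: lt_le_trans h. Qed.

Lemma sum_sub (R : realType) (I : finType) (P Q : pred I) (F : I -> R) :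
  (forall i, 0 <= F i) -> (forall i, P i -> Q i) ->
  \sum_(i | P i) F i <= \sum_(i | Q i) F i.
Proof.
move=> F0 PQ; rewrite [X in X <= _]big_mkcond [X in _ <= X]big_mkcond.
apply: ler_sum => i _; case: ifP => Pi; first by rewrite (PQ i Pi).
by case: ifP.
Qed.

Lemma sum_ge_term (R : realType) (I : finType) (P : pred I) (F : I -> R) j :
  (forall i, 0 <= F i) -> P j -> F j <= \sum_(i | P i) F i.
Proof.
move=> F0 Pj; rewrite (bigD1 j Pj) /=; rewrite lerDl.
by apply: sumr_ge0 => i _.
Qed.

Lemma sum_two (R : realType) (I : finType) (x y : I) (F H : I -> R) :
  \sum_z ((if z == x then F z else 0) + (if z == y then H z else 0)) = F x + H y.
Proof.
by rewrite big_split /= -!big_mkcond /= !big_pred1_eq.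
Qed.

Lemma rho_xx (R : realType) (tau : nat) (d : R) (x : 'I_tau.+1) : rhoS d x x = 0.
Proof. by rewrite /rhoS eqxx. Qed.

Lemma rho_le_d (R : realType) (tau : nat) (d : R) (x y : 'I_tau.+1) :
  1 <= d -> rhoS d x y <= d.
Proof. move=> d1; rewrite /rhoS; case: ifP => _; first lra. case: ifP => _; lra. Qed.

Lemma rho_ge0 (R : realType) (tau : nat) (d : R) (x y : 'I_tau.+1) :
  1 <= d -> 0 <= rhoS d x y.
Proof. move=> d1; rewrite /rhoS; case: ifP => _; first lra. case: ifP => _; lra. Qed.

Definition ratio (R : realType) (tau : nat) (d m kappa : R)
  (f : 'I_tau.+1 -> R) (y : 'I_tau.+1) (s : R) : R :=
  (muS m (ballS d y (kappa * s)))^-1 * intBallS d m f y s.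

Lemma D_ge (R : realType) (tau : nat) (d m kappa s : R) (y : 'I_tau.+1) :
  1 <= m -> 0 < kappa * s -> wtS m y <= muS m (ballS d y (kappa * s)).
Proof.
move=> m1 ks; rewrite /muS; apply: (@sum_ge_term R _ _ (fun i => wtS m i) y).
  by move=> i; apply/ltW/wt_gt0.
by rewrite /ballS inE rho_xx.
Qed.

Lemma D_gt0 (R : realType) (tau : nat) (d m kappa s : R) (y : 'I_tau.+1) :
  1 <= m -> 0 < kappa * s -> 0 < muS m (ballS d y (kappa * s)).
Proof. move=> m1 ks; have := D_ge d y m1 ks; have := wt_gt0 y m1; lra. Qed.

Lemma I_ge0 (R : realType) (tau : nat) (d m : R) f (y : 'I_tau.+1) s :
  1 <= m -> 0 <= intBallS d m f y s.
Proof. by move=> m1; apply: sumr_ge0 => i _; rewrite mulr_ge0 // ltW // wt_gt0. Qed.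

Lemma ratio_ge0 (R : realType) (tau : nat) (d m kappa : R) f (y : 'I_tau.+1) s :
  1 <= m -> 0 < kappa * s -> 0 <= ratio d m kappa f y s.
Proof.
move=> m1 ks; rewrite /ratio mulr_ge0 ?I_ge0 //.
by rewrite invr_ge0 ltW // D_gt0.
Qed.

Lemma ratio_le_M (R : realType) (tau : nat) (d m kappa : R) f (y : 'I_tau.+1) s M :
  1 <= m -> 1 <= kappa -> 0 < s -> (forall z, `|f z| <= M) ->
  ratio d m kappa f y s <= M.
Proof.
move=> m1 k1 s0 fM.
have ks : 0 < kappa * s by rewrite mulr_gt0 //; lra.
have M0 : 0 <= M by apply: le_trans (fM y).
rewrite /ratio mulrC ler_pdivrMr ?D_gt0 //.
rewrite /intBallS /muS mulr_sumr.
apply: le_trans (_ : \sum_(x | rhoS d y x < s) M * wtS m x <= _).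
  by apply: ler_sum => i _; rewrite ler_wpM2r // ltW // wt_gt0.
apply: (@sum_sub R _ _ _ (fun x => M * wtS m x)).
  by move=> i; rewrite mulr_ge0 // ltW // wt_gt0.
move=> i /= h; apply: (lt_le_trans h).
by rewrite ler_peMl //; lra.
Qed.

Lemma wt_0 (R : realType) (tau : nat) (m : R) : wtS m (ord0 : 'I_tau.+1) = 1.
Proof. by rewrite /wtS eqxx. Qed.
Lemma wt_nz (R : realType) (tau : nat) (m : R) (x : 'I_tau.+1) : x != ord0 -> wtS m x = m.
Proof. by rewrite /wtS => /negbTE ->. Qed.
Lemma rho_0x (R : realType) (tau : nat) (d : R) (x : 'I_tau.+1) :
  x != ord0 -> rhoS d ord0 x = 1.
Proof. by rewrite /rhoS eq_sym => /negbTE ->; rewrite eqxx. Qed.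
Lemma rho_x0 (R : realType) (tau : nat) (d : R) (x : 'I_tau.+1) :
  x != ord0 -> rhoS d x ord0 = 1.
Proof. by rewrite /rhoS => /negbTE ->; rewrite eqxx orbT. Qed.
Lemma rho_nn (R : realType) (tau : nat) (d : R) (x y : 'I_tau.+1) :
  x != y -> x != ord0 -> y != ord0 -> rhoS d x y = d.
Proof. by rewrite /rhoS => /negbTE -> /negbTE -> /negbTE ->. Qed.
Lemma ballE (R : realType) (tau : nat) (d : R) (y : 'I_tau.+1) s z :
  ballS d y s z = (rhoS d y z < s).
Proof. by []. Qed.

Definition Itot (R : realType) (tau : nat) (m : R) (f : 'I_tau.+1 -> R) : R :=
  \sum_z `|f z| * wtS m z.
Definition muT (R : realType) (tau : nat) (m : R) : R :=
  \sum_(z : 'I_tau.+1) wtS m z.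

Lemma muT_gt0 (R : realType) (tau : nat) (m : R) : 1 <= m -> 0 < muT tau m.
Proof.
move=> m1; rewrite /muT (bigD1 ord0) //= ltr_wpDr ?wt_gt0 //.
by apply: sumr_ge0 => i _; rewrite ltW // wt_gt0.
Qed.

Lemma Itot_ge0 (R : realType) (tau : nat) (m : R) (f : 'I_tau.+1 -> R) :
  1 <= m -> 0 <= Itot m f.
Proof. by move=> m1; apply: sumr_ge0 => i _; rewrite mulr_ge0 // ltW // wt_gt0. Qed.

Lemma ratio_U2 (R : realType) (tau : nat) (d m kappa : R) (f : 'I_tau.+1 -> R)
  (x y : 'I_tau.+1) (s : R) :
  1 < d -> 1 <= m -> 1 <= kappa -> x != ord0 -> 0 < s -> rhoS d y x < s ->
  ratio d m kappa f y s <=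
    `|f x| + (if kappa < d then `|f ord0| / (m + 1) else 0) + Itot m f / muT tau m.
Proof.
move=> d1 m1 k1 xn0 s0 yxs.
have ks : 0 < kappa * s by rewrite mulr_gt0 //; lra.
have sks : s <= kappa * s by rewrite ler_peMl //; lra.
have D0 := D_gt0 d y m1 ks.
have I0 := I_ge0 d f y s m1.
have e0 : 0 <= (if kappa < d then `|f ord0| / (m + 1) else 0).
  by case: ifP => // _; rewrite divr_ge0 //; lra.
have mT0 := muT_gt0 tau m1.
have A0 : 0 <= Itot m f / muT tau m by rewrite divr_ge0 ?Itot_ge0 // ltW.
have fx0 : 0 <= `|f x| by [].
set e := (if kappa < d then _ else _) in e0 *.
have [all|nall] := pselect (forall z, rhoS d y z < kappa * s).
  have DT : muS m (ballS d y (kappa * s)) = muT tau m.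
    by rewrite /muS /muT; apply: eq_bigl => z; apply/idP; exact: all.
  have II : intBallS d m f y s <= Itot m f.
    by apply: (@sum_sub R _ _ _ (fun z => `|f z| * wtS m z)) => // i;
      rewrite mulr_ge0 // ltW // wt_gt0.
  have : ratio d m kappa f y s <= Itot m f / muT tau m.
    by rewrite /ratio DT mulrC ler_pM2r // invr_gt0.
  lra.
case/existsNP: nall => z0 /negP; rewrite -leNgt => hz0.
have rz0 : rhoS d y z0 <= d by apply: rho_le_d; lra.
have yx : y = x.
  case: (eqVneq y ord0) => [y0|yn0].
    exfalso.
    have h1 : rhoS d y x = 1 by rewrite /rhoS y0 eq_sym (negbTE xn0) eqxx.
    have h2 : rhoS d y z0 <= 1.
      by rewrite /rhoS y0; case: ifP => _ //; case: ifP => _; lra.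
    lra.
  case: (eqVneq y x) => // yx; exfalso.
  have h1 : rhoS d y x = d by rewrite /rhoS (negbTE yx) (negbTE yn0) (negbTE xn0).
  lra.
subst y.
have Ib : intBallS d m f x s <= `|f x| * m + (if 1 < s then `|f ord0| else 0).
  rewrite /intBallS big_mkcond /=.
  apply: le_trans (_ : \sum_z ((if z == x then `|f z| * wtS m z else 0) +
     (if z == ord0 then (if 1 < s then `|f z| * wtS m z else 0) else 0)) <= _).
    apply: ler_sum => z _; case: (eqVneq z x) => [->|zx].
      by rewrite rho_xx s0 (negbTE xn0) addr0.
    case: (eqVneq z ord0) => [->|zn0].
      by rewrite add0r /rhoS (negbTE xn0) eqxx orbT.
    have -> : rhoS d x z = d by rewrite /rhoS eq_sym (negbTE zx) (negbTE zn0) (negbTE xn0).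
    rewrite ifF ?addr0 //; apply/negbTE; rewrite -leNgt; lra.
  rewrite sum_two /wtS (negbTE xn0) eqxx mulr1; case: ifP => _ //.
have Db : m + (if 1 < kappa * s then 1 else 0) <= muS m (ballS d x (kappa * s)).
  rewrite /muS big_mkcond /=.
  apply: le_trans (_ : \sum_z ((if z == x then wtS m z else 0) +
     (if z == ord0 then (if 1 < kappa * s then wtS m z else 0) else 0)) <= _).
    rewrite sum_two /wtS (negbTE xn0) eqxx; case: ifP => _ //.
  apply: ler_sum => z _; case: (eqVneq z x) => [->|zx].
    by rewrite (negbTE xn0) addr0 /ballS inE rho_xx ks.
  case: (eqVneq z ord0) => [->|zn0].
    by rewrite add0r /ballS inE /rhoS (negbTE xn0) eqxx orbT.
  rewrite add0r; case: ifP => _ //; apply/ltW/wt_gt0 => //.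
rewrite /ratio mulrC; set I := intBallS _ _ _ _ _ in Ib *.
set D := muS _ _ in Db D0 *.
have [s1|s1] := lerP s 1.
  rewrite ltNge s1 /= addr0 in Ib.
  have : I / D <= `|f x|.
    rewrite ler_pdivrMr //; apply: le_trans Ib _; apply: ler_wpM2l => //.
    by move: Db; case: ifP => _; lra.
  lra.
have kd : kappa < d.
  have : kappa < kappa * s by rewrite ltr_pMr //; lra.
  lra.
have ks1 : 1 < kappa * s by lra.
rewrite /e kd s1 ks1 in Ib Db *.
have : I / D <= `|f x| + `|f ord0| / (m + 1).
  rewrite ler_pdivrMr //.
  have h : (`|f x| + `|f ord0| / (m + 1)) * (m + 1) = `|f x| * (m + 1) + `|f ord0|.
    by rewrite mulrDl divfK // gt_eqF //; lra.
  have a0 : 0 <= `|f ord0| / (m + 1) by rewrite divr_ge0 //; lra.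
  nra.
lra.
Qed.

Lemma fz_le_Itot (R : realType) (tau : nat) (m : R) (f : 'I_tau.+1 -> R) z :
  1 <= m -> `|f z| <= Itot m f.
Proof.
move=> m1; apply: le_trans (_ : `|f z| * wtS m z <= _).
  by rewrite ler_peMr // wt_ge1.
apply: (@sum_ge_term R _ _ (fun z => `|f z| * wtS m z)) => // i.
by rewrite mulr_ge0 // ltW // wt_gt0.
Qed.

Definition goodT (R : realType) (tau : nat) (d m kappa : R)
  (T : ('I_tau.+1 -> R) -> ('I_tau.+1 -> R)) :=
  [/\ (forall f x, 0 <= T f x),
      (forall f x B, (forall y s, 0 < s -> rhoS d y x < s ->
          ratio d m kappa f y s <= B) -> T f x <= B) &
      (forall f x s, 0 < s -> ratio d m kappa f x s <= T f x)].

Lemma good_Mc (R : realType) (tau : nat) (d m kappa : R) :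
  1 < d -> 1 <= m -> 1 <= kappa -> goodT d m kappa (@McS R tau d m kappa).
Proof.
move=> d1 m1 k1.
have P3 : forall (f : 'I_tau.+1 -> R) x s, 0 < s -> ratio d m kappa f x s <= McS d m kappa f x.
  move=> f x s s0; rewrite /McS; set E := (_ @` _).
  have hE : has_ubound E.
    exists (Itot m f) => r [t t0 <-]; apply: ratio_le_M => // z.
    exact: fz_le_Itot.
  by apply: (ub_le_sup hE); exists s.
split => //.
- move=> f x; apply: le_trans (P3 f x 1 ltr01); apply: ratio_ge0 => //.
  by rewrite mulr1; lra.
- move=> f x B H; rewrite /McS; apply: ge_sup.
    by exists (ratio d m kappa f x 1), 1 => //=; rewrite ltr01.
  by move=> r [t t0 <-]; apply: H => //; rewrite rho_xx.
Qed.

Lemma good_Mu (R : realType) (tau : nat) (d m kappa : R) :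
  1 < d -> 1 <= m -> 1 <= kappa -> goodT d m kappa (@MuS R tau d m kappa).
Proof.
move=> d1 m1 k1.
have P3 : forall (f : 'I_tau.+1 -> R) x y s, 0 < s -> rhoS d y x < s ->
    ratio d m kappa f y s <= MuS d m kappa f x.
  move=> f x y s s0 yx; rewrite /MuS; set E := (_ @` _).
  have hE : has_ubound E.
    exists (Itot m f) => r [[t u] [/= u0 _] <-]; apply: ratio_le_M => // z.
    exact: fz_le_Itot.
  by apply: (ub_le_sup hE); exists (y, s).
split => //.
- move=> f x; apply: le_trans (P3 f x x 1 ltr01 _); last by rewrite rho_xx ltr01.
  by apply: ratio_ge0 => //; rewrite mulr1; lra.
- move=> f x B H; rewrite /MuS; apply: ge_sup.
    by exists (ratio d m kappa f x 1), (x, 1) => //=; rewrite rho_xx ltr01.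
  by move=> r [[t u] [/= u0 tx] <-]; apply: H.
- by move=> f x s s0; apply: P3 => //; rewrite rho_xx.
Qed.

Definition fdel {R : realType} (tau : nat) : 'I_tau.+1 -> R :=
  fun z => if z == ord0 then 1 else 0.
Arguments fdel {R} tau _.

Lemma muT_val (R : realType) (tau : nat) (m : R) : muT tau m = 1 + tau%:R * m.
Proof.
rewrite /muT big_ord_recl /wtS eqxx; congr (_ + _).
rewrite (eq_bigr (fun _ => m)) //.
by rewrite sumr_const card_ord mulr_natl.
Qed.

Lemma sum_nz (R : realType) (tau : nat) (m : R) :
  \sum_(z : 'I_tau.+1 | z != ord0) wtS m z = tau%:R * m.
Proof.
have := muT_val tau m; rewrite /muT (bigD1 ord0) //= {1}/wtS eqxx => h.
by apply: (addrI 1); rewrite h.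
Qed.

Lemma ratio_f0_0 (R : realType) (tau : nat) (d m kappa : R) :
  1 < d -> 1 <= m -> 1 <= kappa ->
  1 <= ratio d m kappa (fdel tau) ord0 kappa^-1.
Proof.
move=> d1 m1 k1.
have k0 : kappa != 0 by rewrite gt_eqF //; lra.
have kk : kappa * kappa^-1 = 1 by rewrite mulfV.
have D1 : muS m (ballS d (ord0 : 'I_tau.+1) (kappa * kappa^-1)) = 1.
  rewrite kk /muS (big_pred1 ord0) ?/wtS ?eqxx // => z.
  rewrite /ballS /= /rhoS eq_sym; case: ifP => _; first by rewrite ltr01.
  by rewrite /= ltxx.
rewrite /ratio D1 invr1 mul1r /intBallS.
apply: le_trans (_ : `|fdel tau ord0| * wtS m ord0 <= _).
  by rewrite /fdel /wtS eqxx normr1 mulr1.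
apply: (@sum_ge_term R _ _ (fun z => `|fdel tau z| * wtS m z)).
  by move=> i; rewrite mulr_ge0 // ltW // wt_gt0.
have h : rhoS d (ord0 : 'I_tau.+1) ord0 = 0 by exact: rho_xx.
rewrite h invr_gt0; lra.
Qed.

Lemma ratio_f0_x (R : realType) (tau : nat) (d m kappa : R) (x : 'I_tau.+1) :
  1 < d -> 1 <= m -> 1 <= kappa -> kappa < d -> x != ord0 ->
  (m + 1)^-1 <= ratio d m kappa (fdel tau) x (((kappa + d) / 2) / kappa).
Proof.
move=> d1 m1 k1 kd xn0.
set c := (kappa + d) / 2.
have k0 : 0 < kappa by lra.
have kc : kappa * (c / kappa) = c by rewrite mulrC divfK // gt_eqF.
have c1 : 1 < c by rewrite /c; lra.
have cd : c < d by rewrite /c; lra.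
have s1 : 1 < c / kappa by rewrite ltr_pdivlMr // mul1r /c; lra.
have D1 : muS m (ballS d x (kappa * (c / kappa))) = m + 1.
  rewrite kc /muS (bigD1 x) /=; last by rewrite /ballS inE (rho_xx d x); lra.
  rewrite (big_pred1 ord0) ?wt_0 ?wt_nz // => z /=.
  case: (eqVneq z ord0) => [->|zn0].
    by rewrite ballE rho_x0 // c1 eq_sym xn0.
  case: (eqVneq z x) => [->|zx]; first by rewrite andbF.
  rewrite /= andbT ballE rho_nn // 1?eq_sym //.
  by apply/negbTE; rewrite -leNgt; lra.
rewrite /ratio D1 -[X in X <= _]mulr1 ler_wpM2l //; first by rewrite invr_ge0; lra.
rewrite /intBallS.
apply: le_trans (_ : `|fdel tau ord0| * wtS m ord0 <= _).
  by rewrite /fdel /wtS eqxx normr1 mulr1.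
apply: (@sum_ge_term R _ _ (fun z => `|fdel tau z| * wtS m z)).
  by move=> i; rewrite mulr_ge0 // ltW // wt_gt0.
by rewrite /= rho_x0.
Qed.

Lemma Lp_f0 (R : realType) (tau : nat) (m q : R) : 1 <= q -> LpnormS m q (fdel tau) = 1.
Proof.
move=> q1; rewrite /LpnormS (bigD1 ord0) //= big1 ?addr0.
  by rewrite /fdel /wtS eqxx normr1 powR1 mulr1 powR1.
move=> i /negbTE hi; rewrite /fdel hi normr0 powR0 ?mul0r //.
by rewrite gt_eqF //; lra.
Qed.

Lemma lower_q (R : realType) (tau : nat) (d m kappa q C : R) T :
  1 < d -> 1 <= m -> 1 <= kappa -> 1 <= q -> goodT d m kappa T ->
  admissibleS (tau := tau) m T q%:E C ->
  2^-1 <= C /\ (kappa < d -> tau%:R `^ q^-1 * m `^ (q^-1 - 1) / 4 <= C).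
Proof.
move=> d1 m1 k1 q1 [P1 P2 P3] /= adm.
have Tn : forall f x, `|T f x| = T f x by move=> f x; rewrite ger0_norm.
have qi0 : 0 <= q^-1 by rewrite invr_ge0; lra.
split.
  have := adm (fdel tau) 2^-1 (ltac:(by rewrite invr_gt0 ltr0n)).
  rewrite Lp_f0 // mulr1; apply: le_trans.
  rewrite -[X in X <= _]mulr1 ler_pM2l ?invr_gt0 ?ltr0n //.
  apply: le_trans (_ : 1 `^ q^-1 <= _); first by rewrite powR1.
  apply: ge0_ler_powR => //; rewrite ?nnegrE ?ler01 //.
    by apply: sumr_ge0 => i _; apply/ltW/wt_gt0.
  apply: le_trans (_ : wtS m ord0 <= _); first by rewrite wt_0.
  rewrite /muS; apply: (@sum_ge_term R _ _ (fun z => wtS m z)).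
    by move=> i; apply/ltW/wt_gt0.
  rewrite /= Tn; apply: lt_le_trans (P3 _ _ kappa^-1 _); last by rewrite invr_gt0; lra.
  by apply: lt_le_trans (ratio_f0_0 tau d1 m1 k1); rewrite invf_lt1 ?ltr1n // ltr0n.
move=> kd.
have m0 : 0 < m + 1 by lra.
set lam := ((m + 1) * 2)^-1.
have lam0 : 0 < lam by rewrite invr_gt0 mulr_gt0 //.
have := adm (fdel tau) lam lam0; rewrite Lp_f0 // mulr1 => h.
have hmu : tau%:R * m <= muS m [pred x | lam < `|T (fdel tau) x|].
  rewrite -sum_nz /muS; apply: (@sum_sub R _ _ _ (fun z => wtS m z)).
    by move=> i; apply/ltW/wt_gt0.
  move=> z zn0 /=; rewrite Tn.
  have := ratio_f0_x d1 m1 k1 kd zn0; move/le_trans; move/(_ _ (P3 _ _ _ _)).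
  have sp : 0 < (kappa + d) / 2 / kappa by rewrite !divr_gt0 //; lra.
  move/(_ sp); apply: lt_le_trans.
  rewrite /lam invfM; have : 0 < (m + 1)^-1 by rewrite invr_gt0.
  lra.
have tm0 : 0 <= tau%:R * m by rewrite mulr_ge0 //; lra.
have : lam * (tau%:R * m) `^ q^-1 <= C.
  apply: le_trans h; apply: ler_wpM2l; first exact: ltW.
  apply: ge0_ler_powR => //; rewrite nnegrE //; lra.
apply: le_trans.
have e1 : (tau%:R * m) `^ q^-1 = tau%:R `^ q^-1 * m `^ q^-1 by rewrite powRM //; lra.
have e2 : m `^ (q^-1 - 1) = m `^ q^-1 / m.
  have mn0 : m != 0 by rewrite gt_eqF //; lra.
  rewrite powRB; last by rewrite mn0 implybT.
  rewrite powRr1 //; lra.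
rewrite e1 e2.
have P0 : 0 <= tau%:R `^ q^-1 * m `^ q^-1 by rewrite mulr_ge0 // powR_ge0.
have -> : tau%:R `^ q^-1 * (m `^ q^-1 / m) / 4 =
    (tau%:R `^ q^-1 * m `^ q^-1) * (m * 4)^-1 by rewrite invfM !mulrA; ring.
rewrite [lam * _]mulrC; apply: ler_wpM2l => //.
rewrite lef_pV2 ?posrE ?mulr_gt0 //; lra.
Qed.

Lemma powR_le (R : realType) (r x y : R) :
  0 <= r -> 0 <= x -> x <= y -> x `^ r <= y `^ r.
Proof.
move=> r0 x0 xy; apply: ge0_ler_powR => //; rewrite nnegrE //.
exact: le_trans xy.
Qed.

Lemma powK1 (R : realType) (x q : R) : 0 <= x -> 0 < q -> (x `^ q) `^ q^-1 = x.
Proof. by move=> x0 q0; rewrite -powRrM mulfV ?gt_eqF // powRr1. Qed.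

Lemma powK2 (R : realType) (x q : R) : 0 <= x -> 0 < q -> (x `^ q^-1) `^ q = x.
Proof. by move=> x0 q0; rewrite -powRrM mulVf ?gt_eqF // powRr1. Qed.

Lemma helper_t (R : realType) (t c q : R) :
  0 <= t -> 0 < c -> 1 <= q -> t * c `^ (q - 1) <= c `^ q + t `^ q.
Proof.
move=> t0 c0 q1.
have q0 : 0 < q by lra.
have q10 : 0 <= q - 1 by lra.
have cq0 := powR_ge0 c q; have tq0 := powR_ge0 t q.
have [tc|ct] := lerP t c.
  have : t * c `^ (q - 1) <= c * c `^ (q - 1).
    by rewrite ler_wpM2r // powR_ge0.
  rewrite mulr_powRB1 //; [lra | lra].
have : t * c `^ (q - 1) <= t * t `^ (q - 1).
  by rewrite ler_wpM2l // powR_le //; lra.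
rewrite mulr_powRB1 //; lra.
Qed.

Lemma LinfS_ge (R : realType) (tau : nat) (g : 'I_tau.+1 -> R) x :
  `|g x| <= LinfS g.
Proof. rewrite /LinfS; exact: le_bigmax. Qed.

Lemma LinfS_ge0 (R : realType) (tau : nat) (g : 'I_tau.+1 -> R) : 0 <= LinfS g.
Proof. exact: le_trans (LinfS_ge g ord0). Qed.

Lemma lower_inf (R : realType) (tau : nat) (d m kappa C : R) T :
  1 < d -> 1 <= m -> 1 <= kappa -> goodT d m kappa T ->
  admissibleS (tau := tau) m T +oo%E C -> 1 <= C.
Proof.
move=> d1 m1 k1 [P1 P2 P3] /= adm.
have L1 : LinfS (fdel tau : 'I_tau.+1 -> R) = 1.
  apply/eqP; rewrite eq_le; apply/andP; split.
    apply: bigmax_le => // i _; rewrite /fdel; case: ifP => _; rewrite ?normr1 ?normr0 //.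
  apply: le_trans (LinfS_ge _ ord0); by rewrite /fdel eqxx normr1.
have := adm (fdel tau); rewrite L1 mulr1; apply: le_trans.
apply: le_trans (LinfS_ge _ ord0); rewrite ger0_norm //.
apply: le_trans (P3 _ _ kappa^-1 _); last by rewrite invr_gt0; lra.
exact: ratio_f0_0.
Qed.

Lemma upper_inf (R : realType) (tau : nat) (d m kappa : R) T :
  1 < d -> 1 <= m -> 1 <= kappa -> goodT d m kappa T ->
  admissibleS (tau := tau) m T +oo%E 1.
Proof.
move=> d1 m1 k1 [P1 P2 P3] /= f; rewrite mul1r.
apply: bigmax_le; first exact: LinfS_ge0.
move=> x _; rewrite ger0_norm //; apply: P2 => y s s0 _.
by apply: ratio_le_M => // z; apply: LinfS_ge.
Qed.

Lemma aux1 (R : realType) (lam a m : R) :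
  0 < m + 1 -> lam / 3 < a / (m + 1) -> lam * m + lam < 3 * a.
Proof.
move=> m0; rewrite ltr_pdivlMr // => h.
have -> : lam * m + lam = 3 * (lam / 3 * (m + 1)) by field.
by rewrite ltr_pM2l ?ltr0n.
Qed.

Lemma aux2 (R : realType) (lam lm b : R) : 0 <= lm -> lm + lam < b -> lam <= b.
Proof. move=> h1 h2; lra. Qed.

Lemma aux3 (R : realType) (lam lm b : R) : 0 <= lam -> lm + lam < b -> lm <= b.
Proof. move=> h1 h2; lra. Qed.

Lemma aux4 (R : realType) (lam x e A : R) :
  lam < x + e + A -> e <= lam / 3 -> A <= lam / 3 -> lam <= 3 * x.
Proof. move=> h1 h2 h3; lra. Qed.

Lemma upper_q (R : realType) (tau : nat) (d m kappa q : R) T :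
  1 < d -> 1 <= m -> 1 <= kappa -> 1 <= q -> goodT d m kappa T ->
  admissibleS (tau := tau) m T q%:E
    ((2 * 6 `^ q) `^ q^-1 * targetS tau d m kappa q%:E).
Proof.
move=> d1 m1 k1 q1 [P1 P2 P3] f lam lam0.
have q0 : 0 < q by lra.
have qi0 : 0 <= q^-1 by rewrite invr_ge0; lra.
have m0 : 0 < m by lra.
set targ := targetS tau d m kappa q%:E.
set N := \sum_x `|f x| `^ q * wtS m x.
have wge0 : forall z : 'I_tau.+1, 0 <= wtS m z by move=> z; apply/ltW/wt_gt0.
have N0 : 0 <= N by apply: sumr_ge0 => i _; rewrite mulr_ge0 ?powR_ge0.
have fzN : forall z, `|f z| `^ q <= N.
  move=> z; apply: le_trans (_ : `|f z| `^ q * wtS m z <= _).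
    by rewrite ler_peMr ?powR_ge0 ?wt_ge1.
  apply: (@sum_ge_term R _ _ (fun z => `|f z| `^ q * wtS m z)) => // i.
  by rewrite mulr_ge0 ?powR_ge0.
have targ1 : 1 <= targ by rewrite /targ /targetS; case: ifP => _ //; rewrite le_max lexx.
have targ0 : 0 <= targ by lra.
have targq1 : 1 <= targ `^ q.
  apply: le_trans (_ : 1 `^ q <= _); first by rewrite powR1.
  by apply: powR_le => //; lra.
have targq2 : kappa < d -> tau%:R * m `^ (1 - q) <= targ `^ q.
  move=> kd.
  have X0 : 0 <= tau%:R `^ q^-1 * m `^ (q^-1 - 1) by rewrite mulr_ge0 ?powR_ge0.
  have : tau%:R `^ q^-1 * m `^ (q^-1 - 1) <= targ.
    by rewrite /targ /targetS kd le_max lexx orbT.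
  move/(powR_le (ltW q0) X0); apply: le_trans.
  rewrite powRM ?powR_ge0 // powK2 //.
  by rewrite -powRrM mulrBl mulVf ?gt_eqF // mul1r.
set E := [pred x | lam < `|T f x|].
have muE0 : 0 <= muS m E by apply: sumr_ge0 => i _.
have muEle : muS m E <= muT tau m by apply: (@sum_sub R _ _ _ (fun z => wtS m z)).
have muTv := muT_val tau m.
have mT0 := muT_gt0 tau m1.
set c3 := 3 `^ q; set c6 := 6 `^ q.
have c31 : 1 <= c3.
  apply: le_trans (_ : 3 `^ 0 <= _); first by rewrite powRr0.
  by apply: ler_powR; [rewrite ler1n | lra].
have c36 : c3 <= c6 by apply: powR_le => //; [lra | rewrite ler_nat].
have lamq0 : 0 <= lam `^ q by apply: powR_ge0.
have c30 : 0 <= c3 by apply: le_trans c31; exact: ler01.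
have m10 : 0 < m + 1 by apply: ltr_wpDl; [exact: ltW | exact: ltr01].
set A := Itot m f / muT tau m.
set e := if kappa < d then `|f ord0| / (m + 1) else 0.
have A0 : 0 <= A by rewrite divr_ge0 ?Itot_ge0 // ltW.
have Tx : forall x, x != ord0 -> T f x <= `|f x| + e + A.
  by move=> x xn0; apply: P2 => y s s0 ys; apply: ratio_U2.
have T0 : T f ord0 <= N `^ q^-1.
  apply: P2 => y s s0 _; apply: ratio_le_M => // z.
  rewrite -(powK1 (normr_ge0 (f z)) q0); apply: powR_le => //; exact: powR_ge0.
have aqN : `|f ord0| `^ q <= N by apply: fzN.
have core : lam `^ q * muS m E <= (2 * c6) * targ `^ q * N.
  have final : forall X, X <= c3 * N + c3 * N * targ `^ q \/ X <= c6 * N \/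
       X <= N + c3 * N -> X <= (2 * c6) * targ `^ q * N.
    move=> X [h|[h|h]]; apply: (le_trans h).
    - have : c3 * N * targ `^ q <= c6 * N * targ `^ q.
        by rewrite ler_wpM2r ?powR_ge0 // ler_wpM2r.
      have : c3 * N <= c3 * N * targ `^ q by rewrite ler_peMr // mulr_ge0 //; lra.
      have : c6 * N * targ `^ q = c6 * (N * targ `^ q) by rewrite mulrA.
      have : 2 * c6 * targ `^ q * N = 2 * (c6 * (N * targ `^ q)) by ring.
      lra.
    - have : c6 * N <= c6 * N * targ `^ q by rewrite ler_peMr // mulr_ge0 //; lra.
      have : 2 * c6 * targ `^ q * N = 2 * (c6 * N * targ `^ q) by ring.
      have : 0 <= c6 * N * targ `^ q by rewrite !mulr_ge0 ?powR_ge0 //; lra.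
      lra.
    - have : c6 * N <= c6 * N * targ `^ q by rewrite ler_peMr // mulr_ge0 //; lra.
      have : 2 * c6 * targ `^ q * N = 2 * (c6 * N * targ `^ q) by ring.
      have : c3 * N <= c6 * N by rewrite ler_wpM2r.
      have : N <= c3 * N by rewrite ler_peMl.
      lra.
  apply: final.
  have lmuT : lam `^ q * muS m E <= lam `^ q * muT tau m by rewrite ler_wpM2l.
  have [G|nG] := ltrP (lam / 3) A.
    right; left.
    set c := lam / 6.
    have c0 : 0 < c by rewrite /c divr_gt0.
    set c' := c `^ (q - 1).
    have c'0 : 0 <= c' by apply: powR_ge0.
    have e5 : c * c' = c `^ q by apply: mulr_powRB1 => //; lra.
    have hI : Itot m f * c' <= c `^ q * muT tau m + N.
      rewrite /Itot mulr_suml.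
      apply: le_trans (_ : \sum_z (c `^ q * wtS m z + `|f z| `^ q * wtS m z) <= _).
        apply: ler_sum => z _; rewrite mulrAC -mulrDl ler_wpM2r //.
        by apply: helper_t => //.
      by rewrite big_split /= -mulr_sumr.
    have h1 : 2 * c * muT tau m <= Itot m f.
      move: G; rewrite /A ltr_pdivlMr // => G.
      have -> : 2 * c = lam / 3 by rewrite /c; field.
      exact: ltW.
    have h2 : 2 * c * muT tau m * c' <= Itot m f * c' by rewrite ler_wpM2r.
    have h4 : 2 * c * muT tau m * c' = 2 * (c `^ q * muT tau m) by rewrite -e5; ring.
    have h5 : c `^ q * muT tau m <= N by lra.
    have h6 : lam `^ q = c6 * c `^ q.
      have -> : lam = 6 * c by rewrite /c; field.
      rewrite powRM //; lra.
    apply: (le_trans lmuT); rewrite h6 -mulrA; apply: ler_wpM2l => //.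
    lra.
  have [H1|nH1] := ltrP (lam / 3) e.
    left.
    have a0 : 0 <= `|f ord0| by [].
    move: H1; rewrite /e; case: ifP => kd H1; last first.
      by exfalso; move: H1; rewrite ltNge divr_ge0 // ltW.
    have H1' := aux1 m10 H1.
    have lm0 : 0 <= lam * m by rewrite mulr_ge0 // ltW.
    have l1 : lam `^ q <= c3 * `|f ord0| `^ q.
      rewrite /c3 -powRM //.
      apply: powR_le; [exact: ltW q0 | exact: ltW lam0 | exact: aux2 lm0 H1'].
    have l2 : (lam * m) `^ q <= c3 * `|f ord0| `^ q.
      rewrite /c3 -powRM //.
      apply: powR_le; [exact: ltW q0 | exact: lm0 | exact: aux3 (ltW lam0) H1'].
    rewrite powRM in l2; [| exact: ltW | exact: ltW].
    set Mq := m `^ q in l2.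
    set Z := tau%:R * m `^ (1 - q).
    have Z0 : 0 <= Z by rewrite mulr_ge0 ?powR_ge0.
    have eM : Mq * m `^ (1 - q) = m.
      rewrite /Mq -powRD; first by rewrite addrC subrK powRr1 // ltW.
      by apply/implyP => _; rewrite gt_eqF.
    have eq1 : lam `^ q * muT tau m = lam `^ q + (lam `^ q * Mq) * Z.
      rewrite muTv /Z.
      have -> : tau%:R * m = tau%:R * (Mq * m `^ (1 - q)) by rewrite eM.
      ring.
    have l3 : (lam `^ q * Mq) * Z <= (c3 * `|f ord0| `^ q) * Z by rewrite ler_wpM2r.
    have l4 : (c3 * `|f ord0| `^ q) * Z <= (c3 * N) * Z.
      by rewrite ler_wpM2r // ler_wpM2l.
    have l5 : (c3 * N) * Z <= c3 * N * targ `^ q.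
      by rewrite ler_wpM2l ?targq2 // mulr_ge0.
    have l6 : c3 * `|f ord0| `^ q <= c3 * N by rewrite ler_wpM2l.
    apply: (le_trans lmuT); rewrite eq1; apply: lerD.
      exact: le_trans l1 l6.
    exact: le_trans l3 (le_trans l4 l5).
  right; right.
  rewrite /muS mulr_sumr big_mkcond /=.
  apply: le_trans (_ : \sum_z ((if z == ord0 then N else 0) +
                              c3 * (`|f z| `^ q * wtS m z)) <= _); last first.
    by rewrite big_split /= -big_mkcond big_pred1_eq -mulr_sumr.
  apply: ler_sum => z _; case: ifP => Ez; last first.
    apply: addr_ge0; first by case: ifP.
    by rewrite !mulr_ge0 ?powR_ge0.
  have Tz : lam < T f z by move: Ez; rewrite /E /= ger0_norm.
  case: (eqVneq z ord0) => [z0|zn0].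
    subst z; rewrite wt_0 mulr1.
    have hN : lam `^ q <= N.
      rewrite -(powK2 N0 q0).
      apply: powR_le; [exact: ltW q0 | exact: ltW lam0 | exact: ltW (lt_le_trans Tz T0)].
    apply: le_trans hN _; rewrite lerDl.
    by rewrite !mulr_ge0 ?powR_ge0.
  rewrite add0r mulrA ler_wpM2r //.
  have h' := aux4 (lt_le_trans Tz (Tx z zn0)) nH1 nG.
  rewrite /c3 -powRM //.
  apply: powR_le; [exact: ltW q0 | exact: ltW lam0 | exact: h'].
have L : lam * muS m E `^ q^-1 = (lam `^ q * muS m E) `^ q^-1.
  by rewrite powRM ?powR_ge0 // powK1 //; exact: ltW.
rewrite L /LpnormS -/N.
apply: le_trans (powR_le qi0 _ core) _; first by rewrite mulr_ge0.
rewrite !powRM ?mulr_ge0 ?powR_ge0 //.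
by rewrite powK1.
Qed.

Lemma best_bounds (R : realType) (tau : nat) (m c1 c2 : R) T (p : \bar R) :
  0 <= c2 -> admissibleS (tau := tau) m T p c2 ->
  (forall C, 0 <= C -> admissibleS (tau := tau) m T p C -> c1 <= C) ->
  c1 <= best_constS m T p <= c2.
Proof.
move=> c20 adm2 low; apply/andP; split.
  apply: lb_le_inf; first by exists c2.
  by move=> C [C0 aC]; apply: low.
by apply: ge_inf; [exists 0 => C [] | split].
Qed.

Lemma main_T (R : realType) (p : \bar R) (tau : nat) (d m kappa : R) (T : ('I_tau.+1 -> R) -> ('I_tau.+1 -> R)) :
  (1%E <= p)%E -> 1 < d -> 1 <= m -> 1 <= kappa -> goodT d m kappa T ->
  4^-1 * targetS tau d m kappa p <= best_constS m T p <=
  (match p with EFin q => (2 * 6 `^ q) `^ q^-1 | _ => 1 end) * targetS tau d m kappa p.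
Proof.
move=> p1 d1 m1 k1 good.
case: p p1 => [q| |] //=; last first.
  move=> _; rewrite /targetS !mulr1; apply: best_bounds; first exact: ler01.
    exact: (upper_inf d1 m1 k1 good).
  move=> C C0 aC; have := lower_inf d1 m1 k1 good aC.
  move=> h; apply: le_trans h; rewrite invf_le1 ?ler1n //.
rewrite lee_fin => q1.
have q0 : 0 < q by apply: lt_le_trans q1; exact: ltr01.
have targ1 : 1 <= targetS tau d m kappa q%:E.
  by rewrite /targetS; case: ifP => _ //; rewrite le_max lexx.
apply: best_bounds.
- by rewrite mulr_ge0 ?powR_ge0 //; apply: le_trans targ1; exact: ler01.
- exact: (upper_q d1 m1 k1 q1 good).
move=> C C0 aC; have [h1 h2] := lower_q d1 m1 k1 q1 good aC.
rewrite mulrC ler_pdivrMr ?ltr0n //.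
rewrite /targetS; case: ifP => kd; last first.
  move: h1; rewrite -(@ler_pM2r _ 4) ?ltr0n //.
  by apply: le_trans; lra.
rewrite ge_max; apply/andP; split.
  move: h1; rewrite -(@ler_pM2r _ 4) ?ltr0n //.
  by apply: le_trans; lra.
by have := h2 kd; rewrite ler_pdivrMr ?ltr0n.
Qed.

Unset Implicit Arguments.

Theorem lemma3p3p2 (R : realType) (p : \bar R) :
  (1%E <= p)%E ->
  exists c1 c2 : R, 0 < c1 /\ 0 < c2 /\
    forall (tau : nat) (d m kappa : R),
      (0 < tau)%N -> 1 < d <= 2 -> 1 <= m -> 1 <= kappa ->
      (c1 * targetS tau d m kappa p <= c_S tau d m kappa p <= c2 * targetS tau d m kappa p)
      /\ (c1 * targetS tau d m kappa p <= cc_S tau d m kappa p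
          <= c2 * targetS tau d m kappa p).
Proof.
move=> p1.
exists 4^-1, (match p with EFin q => (2 * 6 `^ q) `^ q^-1 | _ => 1 end).
split; first by rewrite invr_gt0 ltr0n.
split.
  case: p p1 => [q| |] //= _; apply: powR_gt0.
move=> tau d m kappa _ /andP[d1 _] m1 k1; split.
  by apply: main_T => //; apply: good_Mu.
by apply: main_T => //; apply: good_Mc.
Qed.
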